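(* Let $q$ be a prime power and let $\mathcal{C}$ be a $\mathcal{GRS}(n,k,d)$ code over $\mathbb{F}_q$ with $d=n-k+1$, distinct evaluation points $\alpha_0,\dots,\alpha_{n-1}\in\mathbb{F}_q$ and non-zero column multipliers $v_0,\dots,v_{n-1}$. Let $\vec c\in\mathcal{C}$ and $\vec r\in\mathbb{F}_q^n$, let $E=\{i : c_i\neq r_i\}$, $\epsilon=|E|$, and assume $\epsilon>d/2$. Let $\Lambda(x)=\prod_{i\in E}(x-\alpha_i)$. Let $H_1(x),H_2(x)\in\mathbb{F}_q[x]$ be coprime polynomials and $A(x),B(x)\in\mathbb{F}_q[x]$ polynomials such that $$\Lambda(x)=A(x)H_1(x)+B(x)H_2(x),\qquad \deg A=\epsilon-\deg H_1,\qquad \deg B\le \epsilon-d+\deg H_1 .$$ Let $L\le n$, $\tau$ and $\tau_L$ be positive integers, put $w_1=\tau-\deg H_1$ and $w_2=\tau-d+\deg H_1$, assume $w_1,w_2\ge 0$, and for $i=0,\dots,L-1$ let $P_i=(H_2(\alpha_i):-H_1(\alpha_i))\in\mathbb{P}^1_{\mathbb{F}_q}$. Let $s,\ell$ be positive integers and $Q(x,y,z)=\sum_{j=0}^{\ell}Q_j(x)y^jz^{\ell-j}$, $Q_j\in\mathbb{F}_q[x]$, a non-zero polynomial which has a zero of multiplicity at least $s$ at $(\alpha_i,P_i)$ for every $i=0,\dots,L-1$ and satisfies $\deg_{(1,w_1,w_2)}Q<s\tau_L$. Let $\epsilon_L=|E\cap\{0,\dots,L-1\}|$ and suppose $\epsilon\neq\tau$.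 Then $Q(x,A(x),B(x))=0$ provided that $$\frac{\ell}{s}\ge\frac{\tau_L-\epsilon_L}{\tau-\epsilon}\ \text{ when } \tau>\epsilon,\qquad\text{respectively}\qquad \frac{\ell}{s}\le\frac{\epsilon_L-\tau_L}{\epsilon-\tau}\ \text{ when } \tau<\epsilon.$$
   Context: A generalised Reed–Solomon code $\mathcal{GRS}(n,k,d)$ over $\mathbb{F}_q$ is $\{(v_0C(\alpha_0),\dots,v_{n-1}C(\alpha_{n-1})) : C\in\mathbb{F}_q[x],\ \deg C<k\}$. In the paper, $H_1,H_2$ are intermediate polynomials of the Extended Euclidean Algorithm run on $x^{d-1}$ and the syndrome polynomial of $\vec r$, and positions are indexed so that positions $0,\dots,L-1$ are the $L$ least reliable ones; only the stated properties are used. Points of $\mathbb{P}^1_{\mathbb{F}_q}$ are pairs $(a:b)\neq(0:0)$ up to non-zero scalar multiples. The $(1,w_1,w_2)$-weighted degree of $x^uy^jz^h$ is $u+w_1j+w_2h$, and of a polynomial the maximum over its monomials. A homogeneous $Q(x,y,z)$ has a zero of multiplicity at least $s$ at $(\alpha,(a:b))\in\mathbb{F}_q\times\mathbb{P}^1_{\mathbb{F}_q}$ if: when $b\neq0$, the polynomial $Q(x+\alpha,\,y+a/b,\,1)\in\mathbb{F}_q[x,y]$ has no monomial $x^uy^v$ with $u+v<s$; when $b=0$, the polynomial $Q(x+\alpha,1,z)\in\mathbb{F}_q[x,z]$ has no monomial $x^uz^v$ with $u+v<s$. *)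

(* Defs.v *)
From HB Require Import structures.
From mathcomp Require Import all_boot all_order all_algebra all_field.
Set Implicit Arguments.
Unset Strict Implicit.
Unset Printing Implicit Defensive.
Import Order.TTheory GRing.Theory Num.Theory.
Local Open Scope ring_scope.

Definition in_GRS (F : fieldType) (n k : nat) (alpha v : 'I_n -> F)
    (c : 'rV[F]_n) : Prop :=
  exists C : {poly F}, (size C <= k)%N /\ forall i : 'I_n, c 0 i = v i * C.[alpha i].

(* Q(x,y,z) = \sum_{j=0}^l Q_j(x) y^j z^(l-j), given by Qs : 'I_l.+1 -> {poly F}.
   Bivariate polynomials are {poly {poly F}}: outer variable (y or z), inner x.
   mult_ge l Qs s alpha a b : Q has a zero of multiplicity >= s at (alpha,(a:b)). *)
Definition mult_ge (F : fieldType) (l : nat) (Qs : 'I_l.+1 -> {poly F})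
    (s : nat) (alpha a b : F) : Prop :=
  if b != 0 then
    (* Q(x+alpha, y + a/b, 1) *)
    let R : {poly {poly F}} :=
      \sum_(j < l.+1) (Qs j \Po ('X + alpha%:P))%:P * ('X + ((a / b)%:P)%:P) ^+ j in
    forall u v : nat, (u + v < s)%N -> (R`_v)`_u = 0
  else
    (* Q(x+alpha, 1, z) *)
    let R : {poly {poly F}} :=
      \sum_(j < l.+1) (Qs j \Po ('X + alpha%:P))%:P * 'X ^+ (l - j) in
    forall u v : nat, (u + v < s)%N -> (R`_v)`_u = 0.

Definition wdeg_lt (F : fieldType) (l : nat) (Qs : 'I_l.+1 -> {poly F})
    (w1 w2 m : int) : Prop :=
  forall (j : 'I_l.+1) (u : nat), (Qs j)`_u != 0 ->
    (u%:Z + w1 * (j : nat)%:Z + w2 * (l - j)%:Z < m).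

Definition evalQ (F : fieldType) (l : nat) (Qs : 'I_l.+1 -> {poly F})
    (A B : {poly F}) : {poly F} :=
  \sum_(j < l.+1) Qs j * A ^+ j * B ^+ (l - j).

(* degree of a polynomial as an integer (used only for non-zero polynomials) *)
Definition pdeg (F : fieldType) (p : {poly F}) : int := ((size p).-1)%:Z.

(* Main.v *)
Require Import Defs.
From HB Require Import structures.
From mathcomp Require Import all_boot all_order all_algebra all_field.
From mathcomp Require Import zify ring lra.
Import Order.TTheory GRing.Theory Num.Theory.
Local Open Scope ring_scope.

Set Implicit Arguments.
Unset Strict Implicit.
Section Aux.
Variable F : fieldType.

Definition low (m : nat) (p : {poly F}) := forall u, (u < m)%N -> p`_u = 0.

Lemma low0 p : low 0 p. Proof. by []. Qed.
Lemma lowW m n p : (m <= n)%N -> low n p -> low m p.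
Proof. move=> mn h u um; apply: h; lia. Qed.
Lemma lowD m p q : low m p -> low m q -> low m (p + q).
Proof. by move=> hp hq u um; rewrite coefD hp ?hq ?addr0. Qed.
Lemma low_sum m (I : Type) (r : seq I) (f : I -> {poly F}) :
  (forall i, low m (f i)) -> low m (\sum_(i <- r) f i).
Proof.
move=> h; elim/big_rec: _ => [|i x _ hx]; first by move=> u _; rewrite coef0.
exact: lowD.
Qed.
Lemma lowM m n p q : low m p -> low n q -> low (m + n) (p * q).
Proof.
move=> hp hq u um; rewrite coefM big1 // => [[j /= hj]] _.
case: (ltnP j m) => jm; first by rewrite hp ?mul0r.
by rewrite hq ?mulr0 //; lia.
Qed.
Lemma lowX p v : low 1 p -> low v (p ^+ v).
Proof.
move=> h; elim: v => [|v ih]; first exact: low0.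
by rewrite exprS (_ : v.+1 = 1 + v)%N //; apply: lowM.
Qed.

Lemma low_dvd (P : {poly F}) (a : F) s :
  low s (P \Po ('X + a%:P)) -> ('X - a%:P) ^+ s %| P.
Proof.
move=> h; set p := P \Po ('X + a%:P).
have ht : take_poly s p = 0.
  by apply/polyP => i; rewrite coef_take_poly coef0; case: ifP => // /h.
rewrite -(comp_polyXaddC_K P a) -/p -(poly_take_drop s p) ht add0r.
by rewrite comp_polyM comp_Xn_poly dvdp_mull.
Qed.

Lemma dvd_prod (P : {poly F}) (I : eqType) (xs : seq I) (al : I -> F) s :
  uniq (map al xs) -> (forall i, i \in xs -> ('X - (al i)%:P) ^+ s %| P) ->
  \prod_(i <- xs) ('X - (al i)%:P) ^+ s %| P.
Proof.
elim: xs => [|x xs ih] /=; first by rewrite big_nil dvd1p.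
case/andP=> hx hu h; rewrite big_cons Gauss_dvdp.
  rewrite h ?mem_head // ih // => i hi; apply: h; by rewrite in_cons hi orbT.
rewrite prodrXl coprimep_expl // coprimep_expr //.
elim: xs hx {ih hu h} => [|y ys ihy] /=; first by rewrite big_nil coprimep1.
rewrite in_cons negb_or => /andP[hxy hys]; rewrite big_cons.
rewrite coprimepMr ihy // andbT coprimep_XsubC2 // subr_eq0 eq_sym //.
Qed.

Definition homog (l : nat) (T : {poly {poly F}}) (Y Z : {poly F}) :=
  \sum_(v < l.+1) T`_v * Y ^+ v * Z ^+ (l - v).

Lemma homogS l (T : {poly {poly F}}) (Y Z : {poly F}) : (size T <= l.+1)%N -> homog l.+1 T Y Z = Z * homog l T Y Z.
Proof.
move=> hs; rewrite /homog big_ord_recr /= nth_default // !mul0r addr0.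
rewrite mulr_sumr; apply: eq_bigr => i _.
by rewrite subSn -1?ltnS // exprS; ring.
Qed.

Lemma homogM l (T : {poly {poly F}}) (c Y Z : {poly F}) : (size T <= l.+1)%N ->
  homog l.+1 (T * ('X + c%:P)) Y Z = (Y + c * Z) * homog l T Y Z.
Proof.
move=> hs.
have -> : homog l.+1 (T * ('X + c%:P)) Y Z =
   \sum_(v < l.+2) (T * 'X)`_v * Y ^+ v * Z ^+ (l.+1 - v) + c * homog l.+1 T Y Z.
  rewrite /homog mulr_sumr -big_split /=; apply: eq_bigr => i _.
  by rewrite mulrDr coefD coefMC; ring.
rewrite homogS // big_ord_recl /= coefMX eqxx !mul0r add0r.
rewrite mulrDl mulrA; congr (_ + _); rewrite /homog mulr_sumr.
by apply: eq_bigr => i _; rewrite coefMX /= exprS; ring.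
Qed.

Lemma homogW l m (T : {poly {poly F}}) (Y Z : {poly F}) : (m <= l)%N -> (size T <= m.+1)%N ->
  homog l T Y Z = Z ^+ (l - m) * homog m T Y Z.
Proof.
move=> ml hs; elim: l ml => [|l ih]; first by rewrite leqn0 => /eqP ->; rewrite subnn mul1r.
rewrite leq_eqVlt => /orP[/eqP <-|]; first by rewrite subnn mul1r.
rewrite ltnS => hml; rewrite homogS ?(leq_trans hs) // ih // subSn // exprS mulrA //.
Qed.

Lemma homogXc l m (c Y Z : {poly F}) : (m <= l)%N ->
  homog l (('X + c%:P) ^+ m) Y Z = (Y + c * Z) ^+ m * Z ^+ (l - m).
Proof.
have hsz k : (size (('X + c%:P) ^+ k) <= k.+1)%N.
  apply: leq_trans (size_poly_exp_leq _ _) _; rewrite size_XaddC /=; lia.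
move=> ml; rewrite (@homogW l m _ Y Z ml) // mulrC; congr (_ * _).
elim: m {ml} => [|m ih].
  by rewrite /homog big_ord1 expr0 coefC /= !expr0 !mulr1.
by rewrite exprSr homogM // ih exprSr mulrC.
Qed.

Lemma homog_lin l (q : 'I_l.+1 -> {poly F}) (T : 'I_l.+1 -> {poly {poly F}}) Y Z :
  homog l (\sum_(j < l.+1) (q j)%:P * T j) Y Z = \sum_(j < l.+1) q j * homog l (T j) Y Z.
Proof.
rewrite /homog; under eq_bigr => v _ do rewrite coef_sum !mulr_suml.
rewrite exchange_big /=; apply: eq_bigr => j _; rewrite mulr_sumr.
by apply: eq_bigr => v _; rewrite coefCM !mulrA.
Qed.

Lemma low_homog l (T : {poly {poly F}}) (Y Z : {poly F}) s : low 1 Y ->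
  (forall u v : nat, (u + v < s)%N -> (T`_v)`_u = 0) -> low s (homog l T Y Z).
Proof.
move=> hY hT; apply: low_sum => v.
apply: (@lowW _ ((s - v) + v + 0)); first lia.
apply: lowM; last exact: low0.
apply: lowM; last exact: lowX.
move=> u hu; apply: hT; lia.
Qed.

Lemma homogXn l m (Y Z : {poly F}) : (m <= l)%N ->
  homog l ('X ^+ m) Y Z = Y ^+ m * Z ^+ (l - m).
Proof. by move=> ml; have := @homogXc l m 0 Y Z ml; rewrite polyC0 addr0 mul0r addr0. Qed.

Lemma pdegM' (p q : {poly F}) : p != 0 -> q != 0 -> pdeg (p * q) = pdeg p + pdeg q.
Proof.
move=> hp hq; rewrite /pdeg size_mul //.
move: hp hq; rewrite -!size_poly_gt0; move: (size p) (size q) => a b; lia.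
Qed.
Lemma pdegX' (p : {poly F}) n : pdeg (p ^+ n) = n%:Z * pdeg p.
Proof. by rewrite /pdeg size_exp PoszM mulrC. Qed.
Lemma pdegD' (m : int) (p q : {poly F}) : (p == 0) || (pdeg p < m) -> (q == 0) || (pdeg q < m) ->
   (p + q == 0) || (pdeg (p + q) < m).
Proof.
case: (eqVneq p 0) => [->|hp]; first by rewrite add0r => _.
case: (eqVneq q 0) => [->|hq]; first by rewrite addr0 => h _; apply/orP; right; exact: h.
rewrite /= => h1 h2; apply/orP; right; move: h1 h2; rewrite /pdeg.
have := size_polyD p q; move: hp hq; rewrite -!size_poly_gt0.
move: (size p) (size q) (size (p + q)) => a b c; lia.
Qed.
End Aux.

Lemma arith_aux (u J K e t h pB w1 w2 sT : int) :
  u + w1 * J + w2 * K < sT -> K * pB <= K * (w2 + e - t) -> w1 = t - h ->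
  u + J * (e - h) + K * pB < sT + (J + K) * (e - t).
Proof. move=> h1 h2 hw; subst w1; nia. Qed.

Lemma r1_aux (s tauL epsL l eps tau : nat) :
  (tauL%:Z - epsL%:Z) * s%:Z <= l%:Z * (tau%:Z - eps%:Z) ->
  (s * tauL)%N%:Z + l%:Z * (eps%:Z - tau%:Z) <= (s * epsL)%N%:Z.
Proof. nia. Qed.
Lemma r2_aux (s tauL epsL l eps tau : nat) :
  l%:Z * (eps%:Z - tau%:Z) <= (epsL%:Z - tauL%:Z) * s%:Z ->
  (s * tauL)%N%:Z + l%:Z * (eps%:Z - tau%:Z) <= (s * epsL)%N%:Z.
Proof. nia. Qed.
Lemma fin_aux (m : int) (a b e s : nat) : (a.-1)%:Z < m -> m <= (s * e)%N%:Z ->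
  b.-1 = (e * s)%N -> (b <= a)%N -> False.
Proof. nia. Qed.

Theorem lemma1 (F : finFieldType) (n k d : nat) (alpha v : 'I_n -> F)
  (c r : 'rV[F]_n) (H1 H2 A B : {poly F}) (L tau tauL s l : nat)
  (Qs : 'I_l.+1 -> {poly F}) :
  (0 < k)%N -> (k <= n)%N -> d = (n - k + 1)%N ->
  injective alpha -> (forall i, v i != 0) ->
  in_GRS k alpha v c ->
  let E := [set i : 'I_n | c 0 i != r 0 i] in
  let eps := #|E| in
  (d < 2 * eps)%N ->
  let Lambda := \prod_(i in E) ('X - (alpha i)%:P) in
  coprimep H1 H2 ->
  Lambda = A * H1 + B * H2 ->
  A != 0 -> pdeg A = eps%:Z - pdeg H1 ->
  (B == 0) || (pdeg B <= eps%:Z - d%:Z + pdeg H1) ->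
  (L <= n)%N -> (0 < tau)%N -> (0 < tauL)%N ->
  let w1 := tau%:Z - pdeg H1 in
  let w2 := tau%:Z - d%:Z + pdeg H1 in
  0 <= w1 -> 0 <= w2 ->
  (0 < s)%N -> (0 < l)%N ->
  (exists j, Qs j != 0) ->
  (forall i : 'I_n, (i < L)%N -> mult_ge Qs s (alpha i) H2.[alpha i] (- H1.[alpha i])) ->
  wdeg_lt Qs w1 w2 (s * tauL)%:Z ->
  let epsL := #|[set i in E | (i < L)%N]| in
  eps <> tau ->
  ((eps < tau)%N ->
     ((tauL%:Z - epsL%:Z)%:~R / (tau%:Z - eps%:Z)%:~R <= (l%:R / s%:R : rat))) ->
  ((tau < eps)%N ->
     ((l%:R / s%:R : rat) <= (epsL%:Z - tauL%:Z)%:~R / (eps%:Z - tau%:Z)%:~R)) ->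
  evalQ Qs A B = 0.

Proof.
move=> k0 kn hd ainj vnz inG E eps hde Lambda hcop hLam Anz hdA hdB Ln tau0 tauL0
  w1 w2 hw1 hw2 s0 l0 hQnz hmult hwdeg epsL hne hr1 hr2.
set S := [set i in E | (i < L)%N].
have hdiv : forall i, i \in S -> ('X - (alpha i)%:P) ^+ s %| evalQ Qs A B.
  move=> i; rewrite inE => /andP[iE iL].
  have hm := hmult i iL; rewrite /mult_ge /= in hm.
  set al := alpha i in hm *.
  have hLa : Lambda.[al] = 0.
    by rewrite /Lambda (bigD1 i) //= hornerM hornerXsubC subrr mul0r.
  have hAB : A.[al] * H1.[al] + B.[al] * H2.[al] = 0.
    by rewrite -!hornerM -hornerD -hLam.
  apply: low_dvd.
  set At := A \Po ('X + al%:P). set Bt := B \Po ('X + al%:P).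
  have hP : evalQ Qs A B \Po ('X + al%:P) =
      \sum_(j < l.+1) (Qs j \Po ('X + al%:P)) * At ^+ j * Bt ^+ (l - j).
    by rewrite /evalQ rmorph_sum; apply: eq_bigr => j _; rewrite !rmorphM !rmorphXn.
  have hAt0 : At`_0 = A.[al] by rewrite -horner_coef0 horner_comp hornerD hornerX hornerC add0r.
  have hBt0 : Bt`_0 = B.[al] by rewrite -horner_coef0 horner_comp hornerD hornerX hornerC add0r.
  rewrite hP.
  move: hm; case: ifP => hb hm.
    have h1nz : H1.[al] != 0 by move: hb; rewrite oppr_eq0.
    set c0 := H2.[al] / - H1.[al] in hm.
    have hA0 : A.[al] = c0 * B.[al].
      have e1 : A.[al] * H1.[al] = - (B.[al] * H2.[al]) by apply/eqP; rewrite -addr_eq0 hAB.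
      apply: (mulIf h1nz); rewrite e1 /c0 invrN mulrN !mulNr; congr (- _); rewrite mulrAC divfK // mulrC //.
    set Y := At - c0%:P * Bt.
    have hY : low 1 Y.
      by move=> u; rewrite ltnS leqn0 => /eqP ->; rewrite coefB coefCM hAt0 hBt0 hA0 subrr.
    rewrite (_ : \sum_(j < l.+1) _ = homog l (\sum_(j < l.+1)
        (Qs j \Po ('X + al%:P))%:P * ('X + (c0%:P)%:P) ^+ j) Y Bt).
      exact: (low_homog l Bt hY hm).
    rewrite homog_lin; apply: eq_bigr => j _.
    rewrite (@homogXc _ l j (c0%:P) Y Bt) ?leq_ord //.
    rewrite subrK mulrA //.
  have h10 : H1.[al] = 0 by apply/eqP; move/negbFE: hb; rewrite oppr_eq0.
  have h2nz : H2.[al] != 0 by apply: (coprimep_root hcop); rewrite /root h10.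
  have hB0 : B.[al] = 0.
    by move: hAB; rewrite h10 mulr0 add0r => /eqP; rewrite mulf_eq0 (negbTE h2nz) orbF => /eqP.
  have hY : low 1 Bt by move=> u; rewrite ltnS leqn0 => /eqP ->; rewrite hBt0.
  rewrite (_ : \sum_(j < l.+1) _ = homog l (\sum_(j < l.+1)
      (Qs j \Po ('X + al%:P))%:P * 'X ^+ (l - j)) Bt At).
    exact: (low_homog l At hY hm).
  rewrite homog_lin; apply: eq_bigr => j _.
  rewrite (@homogXn _ l (l - j) Bt At) ?leq_subr // subKn ?leq_ord //.
  by rewrite -mulrA (mulrC (Bt ^+ _)) mulrA.
have huniq : uniq (map alpha (enum S)) by rewrite map_inj_uniq ?enum_uniq.
have hprod : \prod_(i <- enum S) ('X - (alpha i)%:P) ^+ s %| evalQ Qs A B.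
  apply: dvd_prod => [|i]; [exact: huniq | rewrite mem_enum; exact: hdiv].
have hsz : (size (\prod_(i <- enum S) ('X - (alpha i)%:P) ^+ s)).-1 = (epsL * s)%N.
  by rewrite prodrXl size_exp size_prod_XsubC -cardE.
pose m : int := (s * tauL)%:Z + l%:Z * (eps%:Z - tau%:Z).
have hmle : m <= (s * epsL)%:Z.
  have hs' : (0:rat) < s%:R by rewrite ltr0n.
  case: (ltngtP eps tau) => [lt|lt|eq]; last by [].
    have hy : (0:rat) < (tau%:Z - eps%:Z)%:~R by rewrite ltr0z subr_gt0 ltz_nat.
    have h := hr1 lt; rewrite ler_pdivrMr // mulrAC ler_pdivlMr // in h.
    move: h; rewrite -[l%:R]/((l%:Z)%:~R) -[s%:R]/((s%:Z)%:~R) -!intrM ler_int /m => h.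
    exact: r1_aux h.
  have hy : (0:rat) < (eps%:Z - tau%:Z)%:~R by rewrite ltr0z subr_gt0 ltz_nat.
  have h := hr2 lt; rewrite ler_pdivlMr // mulrAC ler_pdivrMr // in h.
  move: h; rewrite -[l%:R]/((l%:Z)%:~R) -[s%:R]/((s%:Z)%:~R) -!intrM ler_int /m => h.
  exact: r2_aux h.
have hterm : forall j : 'I_l.+1, (Qs j * A ^+ j * B ^+ (l - j) == 0) ||
    (pdeg (Qs j * A ^+ j * B ^+ (l - j)) < m).
  move=> j; case: (eqVneq (Qs j * A ^+ j * B ^+ (l - j)) 0) => //= hnz.
  have [hqa hb'] : Qs j * A ^+ j != 0 /\ B ^+ (l - j) != 0.
    by move: hnz; rewrite mulf_eq0 negb_or => /andP.
  have [hq ha'] : Qs j != 0 /\ A ^+ j != 0.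
    by move: hqa; rewrite mulf_eq0 negb_or => /andP.
  rewrite !pdegM' // !pdegX'.
  have hlc : (Qs j)`_(size (Qs j)).-1 != 0 by rewrite -lead_coefE lead_coef_eq0.
  have hw := hwdeg j _ hlc.
  have hjl : (j <= l)%N := leq_ord j.
  have hBb : (l - j)%:Z * pdeg B <= (l - j)%:Z * (w2 + eps%:Z - tau%:Z).
    case: (eqVneq (l - j)%N 0%N) => [->|hlj]; first by rewrite !mul0r.
    have hBnz : B != 0 by apply: contra hb' => /eqP ->; rewrite expr0n (negbTE hlj).
    apply: ler_wpM2l => //; move: hdB; rewrite (negbTE hBnz) /= /w2 => h.
    by apply: (le_trans h); rewrite le_eqVlt; apply/orP; left; apply/eqP; ring.
  have hl : Posz l = Posz j + Posz (l - j) by rewrite -PoszD subnKC.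
  rewrite /m hl hdA; apply: (arith_aux hw hBb); by [].
have hPdeg : (evalQ Qs A B == 0) || (pdeg (evalQ Qs A B) < m).
  rewrite /evalQ; elim/big_rec: _ => [|j p _ hp]; first by rewrite eqxx.
  exact: pdegD' (hterm j) hp.
case: (eqVneq (evalQ Qs A B) 0) => // hnz.
move: hPdeg; rewrite (negbTE hnz) /= => hlt.
case: (fin_aux hlt hmle hsz (dvdp_leq hnz hprod)).
Qed.
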